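(* Let $\mathcal N$ be a network with a binary collision profile and character $D^*$. For every integer $T\ge\max(D^*,1)$, $\mathcal R^{(\mathcal M_T,\mathcal E_T)}\subseteq\mathcal R^{\mathcal N}$ (and hence, together with $\mathcal R^{\mathcal N}\subseteq\mathcal R^{(\mathcal M_T,\mathcal E_T)}$, equality holds).
   Context: A network is a triple $\mathcal N=(\mathcal L,\mathcal I,D_{\mathcal L})$ where $\mathcal L$ is a finite nonempty set of links, each $\mathcal I(l)$ is a collection of nonempty subsets of $\mathcal L$, and $D_{\mathcal L}$ assigns an integer $D_{\mathcal L}(l,l')$ to every pair with $l'\in\phi$ for some $\phi\in\mathcal I(l)$. The profile is binary if every $\phi\in\mathcal I(l)$ is a singleton. The character is $D^*=\max_{l}\max_{\phi\in\mathcal I(l)}\max_{l'\in\phi}|D_{\mathcal L}(l,l')|$ (0 if there are no collision sets). A schedule is a map $S:\mathcal L\times\mathbb Z\to\{0,1\}$; $S(l,t)$ has a collision if there is $\phi\in\mathcal I(l)$ with $S(l',t+D_{\mathcal L}(l,l'))=1$ for all $l'\in\phi$; $S$ is collision free if no $(l,t)$ with $S(l,t)=1$ has a collision. $R_S(l)=\lim_{T\to\infty}\frac1T\sum_{t=0}^{T-1}\iota\big(S(l,t)=1\text{ and collision free}\big)$ when it exists; $R_S=(R_S(l))_l$. A nonnegative vector $R\in[0,\infty)^{\mathcal L}$ is achievable if for every $\epsilon>0$ some schedule $S$ has a rate vector with $R_S(l)\ge R(l)-\epsilon$ for all $l$; $\mathcal R^{\mathcal N}$ is the set of achievable nonnegative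 vectors. $S[T,k]$ is the $|\mathcal L|\times T$ binary matrix with $S[T,k](l,j)=S(l,kT+j)$. The scheduling graph $(\mathcal M_T,\mathcal E_T)$ has vertex set $\mathcal M_T$ = all $|\mathcal L|\times T$ binary matrices $A$ with $A=S[T,0]$ for some collision-free schedule $S$, and edge set $\mathcal E_T$ = all pairs $(A,B)$ with $A=S[T,0]$, $B=S[T,1]$ for some collision-free $S$. A cycle is a sequence $(A_0,\dots,A_k)$, $k\ge1$, with $(A_i,A_{i+1})\in\mathcal E_T$, $A_k=A_0$, and $A_0,\dots,A_{k-1}$ pairwise distinct; its rate vector is $R_C=\frac{1}{kT}\sum_{i=0}^{k-1}A_i\mathbf 1$. $\mathcal R^{(\mathcal M_T,\mathcal E_T)}$ is the convex hull of the rate vectors of all cycles. *)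

(* Defs.v *)
From HB Require Import structures.
From mathcomp Require Import all_boot all_order all_algebra.
From mathcomp Require Import all_classical all_reals all_analysis.
Set Implicit Arguments. Unset Strict Implicit. Unset Printing Implicit Defensive.
Import Order.TTheory GRing.Theory Num.Theory numFieldNormedType.Exports.
Local Open Scope ring_scope.
Local Open Scope classical_set_scope.

(* A network over a finite type of links L:
   coll l = the collection I(l) of (nonempty) collision sets of link l,
   delay l l' = D_L(l,l') (a total function; only values with l' in some
   phi in I(l) are ever used). *)
Record network (L : finType) := Network {
  coll : L -> {set {set L}} ;
  delay : L -> L -> int ;
  coll_nonempty : forall l phi, phi \in coll l -> phi != finset.set0 }.

Definition binary_profile (L : finType) (N : network L) : Prop :=
  forall l phi, phi \in coll N l -> #|phi| = 1%N.

(* character D^* (0 if there are no collision sets) *)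
Definition character (L : finType) (N : network L) : nat :=
  \max_(l : L) \max_(phi in coll N l) \max_(l' in phi) `|delay N l l'|%N.

Definition schedule (L : finType) := L -> int -> bool.

Definition has_collision (L : finType) (N : network L) (S : schedule L)
  (l : L) (t : int) : bool :=
  [exists phi in coll N l, [forall l' in phi, S l' (t + delay N l l')]].

Definition collision_free (L : finType) (N : network L) (S : schedule L) : Prop :=
  forall l t, S l t -> ~~ has_collision N S l t.

Definition success (L : finType) (N : network L) (S : schedule L)
  (l : L) (t : int) : bool := S l t && ~~ has_collision N S l t.

Definition avg_success (R : realType) (L : finType) (N : network L)
  (S : schedule L) (l : L) (n : nat) : R :=
  (\sum_(t < n) ((success N S l (nat_of_ord t)%:Z : nat)%:R : R)) / n%:R.

Definition has_rate (R : realType) (L : finType) (N : network L)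
  (S : schedule L) (l : L) (r : R) : Prop :=
  avg_success R N S l @ \oo --> r.

Definition achievable (R : realType) (L : finType) (N : network L)
  (Rv : L -> R) : Prop :=
  forall eps : R, 0 < eps -> exists S : schedule L,
    forall l, exists r, has_rate N S l r /\ Rv l - eps <= r.

Definition achievable_region (R : realType) (L : finType) (N : network L)
  : set (L -> R) :=
  [set Rv | (forall l, 0 <= Rv l) /\ achievable N Rv].

Definition bmat (L : finType) (T : nat) := {ffun L * 'I_T -> bool}.

Definition block (L : finType) (S : schedule L) (T k : nat) : bmat L T :=
  [ffun p : L * 'I_T => S p.1 ((k * T + nat_of_ord p.2)%N)%:Z].

Definition sg_vertex (L : finType) (N : network L) (T : nat) (A : bmat L T) : Prop :=
  exists S : schedule L, collision_free N S /\ block S T 0 = A.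

Definition sg_edge (L : finType) (N : network L) (T : nat) (A B : bmat L T) : Prop :=
  exists S : schedule L, collision_free N S /\ block S T 0 = A /\ block S T 1 = B.

Definition sg_cycle (L : finType) (N : network L) (T k : nat)
  (A : nat -> bmat L T) : Prop :=
  [/\ (1 <= k)%N,
      (forall i, (i < k)%N -> sg_edge N (A i) (A i.+1)),
      A k = A 0%N &
      (forall i j, (i < k)%N -> (j < k)%N -> A i = A j -> i = j)].

Definition cycle_rate (R : realType) (L : finType) (T k : nat)
  (A : nat -> bmat L T) : L -> R :=
  fun l => (k * T)%:R^-1 *
    \sum_(i < k) \sum_(j < T) ((A (nat_of_ord i) (l, j) : nat)%:R : R).

Definition cvx_hull (R : realType) (L : finType) (X : set (L -> R)) : set (L -> R) :=
  [set x | exists (n : nat) (lam : 'I_n -> R) (v : 'I_n -> L -> R),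
     [/\ (forall i, 0 <= lam i), \sum_(i < n) lam i = 1,
         (forall i, X (v i)) & x = (fun l => \sum_(i < n) lam i * v i l)]].

Definition graph_region (R : realType) (L : finType) (N : network L) (T : nat)
  : set (L -> R) :=
  cvx_hull [set v | exists (k : nat) (A : nat -> bmat L T),
                      sg_cycle N k A /\ v = cycle_rate R k A].

(* Main.v *)
Require Import Defs.
From mathcomp Require Import all_boot all_order all_algebra.
From mathcomp Require Import all_classical all_reals all_analysis.
From mathcomp Require Import zify ring lra.
Set Implicit Arguments. Unset Strict Implicit. Unset Printing Implicit Defensive.
Import Order.TTheory GRing.Theory Num.Theory numFieldNormedType.Exports.
Local Open Scope classical_set_scope.
Local Open Scope ring_scope.

Section Net.
Variables (L : finType) (N : network L).

Lemma cf_shift (S S' : schedule L) (c : int) :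
  collision_free N S -> (forall l t, S' l t -> S l (t - c)) -> collision_free N S'.
Proof.
move=> cfS h l t /h St; apply/negP => /existsP [phi /andP [phi_in /forallP Hphi]].
move: (cfS l _ St) => /negP; apply; apply/existsP; exists phi; rewrite phi_in /=.
apply/forallP => l'; apply/implyP => l'in.
have := h _ _ (implyP (Hphi l') l'in).
by rewrite addrAC.
Qed.

Definition bZ T : bmat L T := [ffun _ => false].

Lemma vertex_edgeZ T (X : bmat L T) : sg_vertex N X -> sg_edge N X (bZ T).
Proof.
case=> S [cf <-]; exists (fun l t => (0 <= t < T%:Z) && S l t); split.
  by apply: (cf_shift (c := 0) cf) => l t /andP[_]; rewrite subr0.
split; apply/ffunP => -[l j]; rewrite !ffunE /=.
  by rewrite mul0n add0n ltz_nat ltn_ord.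
rewrite mul1n ltz_nat; have -> : (T + j < T)%N = false by lia.
by [].
Qed.

Lemma vertex_Zedge T (Y : bmat L T) : sg_vertex N Y -> sg_edge N (bZ T) Y.
Proof.
case=> S [cf <-]; exists (fun l t => (T%:Z <= t) && S l (t - T%:Z)); split.
  by apply: (cf_shift (c := T%:Z) cf) => l t /andP[_].
split; apply/ffunP => -[l j]; rewrite !ffunE /=.
  rewrite mul0n add0n lez_nat; have -> : (T <= j)%N = false by have := ltn_ord j; lia.
  by [].
rewrite mul1n lez_nat leq_addr /=; congr (S l _).
by rewrite mul0n add0n PoszD addrAC subrr add0r.
Qed.

Lemma edge_vertexl T (X Y : bmat L T) : sg_edge N X Y -> sg_vertex N X.
Proof. by case=> S [cf [hX _]]; exists S. Qed.

Lemma edge_vertexr T (X Y : bmat L T) : sg_edge N X Y -> sg_vertex N Y.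
Proof.
case=> S [cf [_ <-]]; exists (fun l t => S l (t + T%:Z)); split.
  by apply: (cf_shift (c := - T%:Z) cf) => l t; rewrite opprK.
by apply/ffunP => -[l j]; rewrite !ffunE /= mul0n add0n mul1n PoszD addrC.
Qed.

Lemma vertexZ T : sg_vertex N (bZ T).
Proof.
exists (fun _ _ => false); split; first by [].
by apply/ffunP => -[l j]; rewrite !ffunE.
Qed.

End Net.
Section Sched.
Variables (L : finType) (N : network L) (T' : nat).
Local Notation T := T'.+1.

Definition sched (Bs : nat -> bmat L T) : schedule L :=
  fun l t => if t is Posz n then Bs (n %/ T)%N (l, inord (n %% T)%N) else false.

Lemma sched_nat Bs l (m j : nat) : (j < T)%N ->
  sched Bs l (m * T + j)%N = Bs m (l, inord j).
Proof.
move=> hj /=; rewrite divnMDl // divn_small // addn0 modnMDl modn_small //.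
Qed.

Lemma block_val (S : schedule L) k (B : bmat L T) l (j : nat) :
  block S T k = B -> (j < T)%N -> S l (k * T + j)%N = B (l, inord j).
Proof.
move=> <- hj; rewrite ffunE /= inordK //.
Qed.

Lemma delay_le l phi l' : phi \in coll N l -> l' \in phi ->
  (`|delay N l l'| <= character N)%N.
Proof.
move=> hphi hl'; rewrite /character.
apply: leq_trans (leq_bigmax l).
apply: leq_trans (leq_bigmax_cond _ hphi).
exact: (leq_bigmax_cond _ hl').
Qed.

Lemma sched_cf Bs : binary_profile N -> (character N <= T)%N ->
  (forall m, sg_edge N (Bs m) (Bs m.+1)) -> collision_free N (sched Bs).
Proof.
move=> bin hc he l [n|n] //= Sn.
apply/negP => /existsP [phi /andP [phin /forallP Hp]].
have [l' phiE] := cards1P (introT eqP (bin _ _ phin)).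
have l'in : l' \in phi by rewrite phiE set11.
have Sl' := implyP (Hp l') l'in.
have hd : (`|delay N l l'| <= T)%N := leq_trans (delay_le phin l'in) hc.
move: Sl'; case Eu: (n%:Z + delay N l l') => [u|u] //= Su.
have dn := divn_eq n T; have du := divn_eq u T.
have mn := ltn_pmod n (ltn0Sn T'); have mu := ltn_pmod u (ltn0Sn T').
set a := (n %/ T)%N in dn; set c := (u %/ T)%N in du.
set m := minn a c.
have [S [cf [h0 h1]]] := he m.
have win : forall l0 (x : nat), (m * T <= x < (m.+2) * T)%N ->
    sched Bs l0 x = S l0 (x - m * T)%N.
  move=> l0 x /andP[x1 x2].
  case: (ltnP (x - m * T) T) => hy.
    have -> : x = (m * T + (x - m * T))%N by lia.
    rewrite sched_nat // -(block_val l0 h0 hy) mul0n add0n.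
    by congr (S l0 _); congr Posz; lia.
  have hy' : (x - m * T - T < T)%N by rewrite mulSn in x2; lia.
  have -> : x = (m.+1 * T + (x - m * T - T))%N by rewrite mulSn; lia.
  rewrite sched_nat // -(block_val l0 h1 hy') mul1n.
  by congr (S l0 _); congr Posz; rewrite mulSn; lia.
have hnu : (n <= u + T /\ u <= n + T)%N.
  move: hd; case: (delay N l l') Eu => [k|k] /= Eu hd.
    move: Eu => [Eu]; lia.
  move: Eu; rewrite /= => Eu. 
  have : (n%:Z - k.+1%:Z = u%:Z) by rewrite -Eu NegzE.
  lia.
have hac : (a <= c.+1)%N.
  rewrite leqNgt; apply/negP => ca.
  have : (c.+2 * T <= a * T)%N by rewrite leq_mul2r ca orbT.
  rewrite !mulSn; lia.
have hca : (c <= a.+1)%N.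
  rewrite leqNgt; apply/negP => ca.
  have : (a.+2 * T <= c * T)%N by rewrite leq_mul2r ca orbT.
  rewrite !mulSn; lia.
have wn : (m * T <= n < m.+2 * T)%N.
  apply/andP; split.
    apply: (@leq_trans (a * T)); last lia.
    by rewrite leq_mul2r geq_minl orbT.
  rewrite !mulSn.
  have : (a * T <= m * T + T)%N.
    rewrite /m; case: (leqP a c) => ac; first lia.
    have : (a * T <= c.+1 * T)%N by rewrite leq_mul2r hac orbT.
    rewrite mulSn; lia.
  lia.
have wu : (m * T <= u < m.+2 * T)%N.
  apply/andP; split.
    apply: (@leq_trans (c * T)); last lia.
    by rewrite leq_mul2r geq_minr orbT.
  rewrite !mulSn.
  have : (c * T <= m * T + T)%N.
    rewrite /m; case: (leqP a c) => ac; last lia.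
    have : (c * T <= a.+1 * T)%N by rewrite leq_mul2r hca orbT.
    rewrite mulSn; lia.
  lia.
have Sn' : sched Bs l n := Sn.
have := cf l (n - m * T)%N; rewrite -(win l n wn) Sn' => /(_ isT) /negP; apply.
apply/existsP; exists phi; rewrite phin /=; apply/forallP => l0.
apply/implyP; rewrite phiE => /set1P ->.
have -> : ((n - m * T)%N%:Z + delay N l l') = (u - m * T)%N%:Z.
  move: wn wu => /andP[wn _] /andP[wu _].
  rewrite -!subzn //; rewrite addrAC Eu //.
by rewrite -(win l' u wu).
Qed.

End Sched.
Section Rate.
Variables (f : nat -> nat) (p : nat).
Hypotheses (p0 : (0 < p)%N) (f1 : forall t, (f t <= 1)%N)
  (fp : forall t, f t = f (t %% p)%N).

Let cnt n := (\sum_(0 <= t < n) f t)%N.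

Lemma cnt_add x : cnt (p + x) = (cnt p + cnt x)%N.
Proof.
rewrite /cnt (@big_cat_nat _ _ _ p 0 (p + x) _ _ (leq0n p) (leq_addr x p)) /=; congr (_ + _)%N.
rewrite -{1}(add0n p) big_addn addKn; apply: eq_bigr => i _.
by rewrite fp modnDr -fp.
Qed.

Lemma cnt_split q r : cnt (q * p + r) = (q * cnt p + cnt r)%N.
Proof.
elim: q => [|q IH]; first by rewrite !mul0n.
by rewrite mulSn -addnA cnt_add IH mulSn addnA.
Qed.

Lemma cnt_le n : (cnt n <= n)%N.
Proof.
have := @leq_sum _ (index_iota 0 n) xpredT f (fun _ => 1%N) (fun i _ => f1 i).
by rewrite sum_nat_const_nat muln1 subn0.
Qed.

Lemma periodic_rate (R : realType) :
  (fun n => (\sum_(t < n) (f t)%:R : R) / n%:R) @ \oo -->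
  ((\sum_(t < p) f t)%:R / p%:R : R).
Proof.
have E n : (\sum_(t < n) (f t)%:R : R) = (cnt n)%:R.
  by rewrite /cnt big_mkord natr_sum.
apply/cvgrPdist_le => e e0.
exists (Num.truncn (p%:R / e)).+1 => // n /= hn.
rewrite !E.
have n0 : (0 < n)%N by lia.
have hpe : p%:R / e < n%:R :> R.
  apply: lt_le_trans (truncnS_gt _) _; rewrite ler_nat; exact: hn.
have hpe' : p%:R < e * n%:R :> R by rewrite -ltr_pdivrMl // mulrC.
have dn := divn_eq n p; have rp := ltn_pmod n p0.
set q := (n %/ p)%N in dn; set r := (n %% p)%N in dn rp.
have cn : cnt n = (q * cnt p + cnt r)%N by rewrite dn cnt_split.
have cp := cnt_le p; have cr := cnt_le r.
have key : `|(cnt p)%:R * n%:R - p%:R * (cnt n)%:R| <= p%:R * p%:R :> R.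
  have nE : n%:R = q%:R * p%:R + r%:R :> R by rewrite {1}dn natrD natrM.
  rewrite nE cn natrD natrM.
  have -> : (cnt p)%:R * ((q%:R * p%:R) + r%:R) -
      p%:R * (q%:R * (cnt p)%:R + (cnt r)%:R) =
      (cnt p)%:R * r%:R - p%:R * (cnt r)%:R :> R by ring.
  have hc : (cnt p)%:R <= p%:R :> R by rewrite ler_nat.
  have hr : r%:R <= p%:R :> R by rewrite ler_nat ltnW.
  have hcr : (cnt r)%:R <= p%:R :> R by rewrite ler_nat; lia.
  have h1 : 0 <= (cnt p)%:R :> R by [].
  have h2 : 0 <= r%:R :> R by [].
  have h3 : 0 <= (cnt r)%:R :> R by [].
  have h4 : 0 <= p%:R :> R by [].
  rewrite ler_norml; apply/andP; split; nra.
have p0R : p%:R != 0 :> R by rewrite pnatr_eq0 -lt0n.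
have n0R : n%:R != 0 :> R by rewrite pnatr_eq0 -lt0n.
have Ep : (\sum_(t < p) f t)%N = cnt p by rewrite /cnt big_mkord.
rewrite Ep.
have -> : (cnt p)%:R / p%:R - (cnt n)%:R / n%:R =
   ((cnt p)%:R * n%:R - p%:R * (cnt n)%:R) / (p%:R * n%:R) :> R.
  by field; rewrite p0R n0R.
rewrite normf_div ler_pdivrMr; last by rewrite normr_gt0 mulf_neq0.
apply: (le_trans key).
rewrite normrM !normr_nat.
have h4 : 0 <= p%:R :> R by [].

nra.
Qed.

End Rate.

Section Frame.
Variables (L : finType) (N : network L) (T' : nat).
Local Notation T := T'.+1.
Local Notation Z := (bZ L T).

Definition ed (X Y : bmat L T) : bool := `[< sg_edge N X Y >].

Lemma cyc_path (A : nat -> bmat L T) k x : sg_cycle N k A -> sg_edge N x (A 0%N) ->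
  path ed x (mkseq A k) /\ last x (mkseq A k) = A k.-1.
Proof.
case=> k1 hed hk _ hx; split.
  apply/(pathP Z) => i; rewrite size_mkseq => ik.
  rewrite (nth_mkseq _ _ ik); case: i ik => [|i] ik /=.
    exact/asboolP.
  by rewrite (nth_mkseq _ _ (ltnW ik)); apply/asboolP; apply: hed; lia.
rewrite (last_nth Z) size_mkseq; case: k k1 {hed hk} => // k _ /=.
by rewrite nth_mkseq.
Qed.

Lemma rep_path (A : nat -> bmat L T) k m x : sg_cycle N k A -> sg_edge N x (A 0%N) ->
  path ed x (flatten (nseq m (mkseq A k))) /\
  sg_vertex N (last x (flatten (nseq m (mkseq A k)))).
Proof.
move=> hc; elim: m x => [|m IH] x hx /=; first by split => //; exact: edge_vertexl hx.
have [p1 l1] := cyc_path hc hx.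
have hlast : sg_edge N (A k.-1) (A 0%N).
  case: hc => k1 hed hk _; rewrite -hk; have := hed k.-1; rewrite prednK //; apply; lia.
rewrite cat_path last_cat p1 l1 /=.
exact: IH.
Qed.

Lemma seg_path (A : nat -> bmat L T) k m : sg_cycle N k A ->
  path ed Z (flatten (nseq m (mkseq A k)) ++ [:: Z]) /\
  last Z (flatten (nseq m (mkseq A k)) ++ [:: Z]) = Z.
Proof.
move=> hc; split; last by rewrite last_cat.
have hZ : sg_edge N Z (A 0%N).
  apply: vertex_Zedge; case: hc => k1 hed _ _; apply: edge_vertexl (hed 0%N k1).
have [p1 v1] := rep_path m hc hZ.
rewrite cat_path p1 /= andbT; apply/asboolP; exact: vertex_edgeZ.
Qed.

Variables (n : nat) (k : 'I_n -> nat) (A : 'I_n -> nat -> bmat L T) (m : 'I_n -> nat).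
Hypothesis hcyc : forall i, sg_cycle N (k i) (A i).

Definition seg i := flatten (nseq (m i) (mkseq (A i) (k i))) ++ [:: Z].
Definition frame := Z :: flatten [seq seg i | i <- enum 'I_n].

Lemma flat_path (s : seq 'I_n) : path ed Z (flatten [seq seg i | i <- s]) /\
  last Z (flatten [seq seg i | i <- s]) = Z.
Proof.
elim: s => [|i s [IH1 IH2]] //=.
have [p1 l1] := seg_path (m i) (hcyc i).
by rewrite cat_path last_cat /seg l1 p1 IH1 IH2.
Qed.

Definition Bs (j : nat) := nth Z frame (j %% size frame).

Lemma Bs_edge j : sg_edge N (Bs j) (Bs j.+1).
Proof.
have [p1 l1] := flat_path (enum 'I_n).
have pw : path ed Z frame by rewrite /frame /= p1 andbT; apply/asboolP; exact: vertex_edgeZ (vertexZ N T).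
have s0 : (0 < size frame)%N by [].
rewrite /Bs; set s := size frame.
have rs := ltn_pmod j s0.
have E : (j.+1 %% s = (j %% s + 1) %% s)%N by rewrite modnDml addn1.
rewrite E; case: (ltnP (j %% s + 1) s) => h.
  rewrite (modn_small h).
  have := (elimT (pathP Z) pw (j %% s + 1)%N h); rewrite addn1 => H.
  exact/asboolP.
have -> : (j %% s + 1 = s)%N by lia.
rewrite modnn.
have -> : (j %% s = s.-1)%N by lia.
rewrite nth_last /frame /= l1.
exact: vertex_edgeZ (vertexZ N T).
Qed.

Definition bsum (B : bmat L T) l : nat := (\sum_(j < T) (B (l, j) : nat))%N.

Lemma sum_blocks (g : nat -> nat) s :
  (\sum_(t < s * T) g t = \sum_(b < s) \sum_(j < T) g (b * T + j))%N.
Proof.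
elim: s => [|s IH]; first by rewrite mul0n !big_ord0.
by rewrite mulSnr big_split_ord [RHS]big_ord_recr /= IH.
Qed.

Lemma S_rate (R : realType) : binary_profile N -> (character N <= T)%N ->
  forall l, has_rate N (sched Bs) l
    (((\sum_(B <- frame) bsum B l)%N%:R / (size frame * T)%N%:R) : R).
Proof.
move=> bin hc l.
have cf := sched_cf bin hc Bs_edge.
set f := fun t : nat => (success N (sched Bs) l t%:Z : nat).
have fS t : f t = (sched Bs l t : nat).
  move: (cf l t); rewrite /f /success; case: (sched Bs l t) => // /(_ isT).
  by move/negbTE ->.
have s0 : (0 < size frame)%N by [].
have p0 : (0 < size frame * T)%N by rewrite muln_gt0 s0.
have f1 t : (f t <= 1)%N by rewrite fS; case: (sched Bs l t).
have fp t : f t = f (t %% (size frame * T))%N.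
  rewrite !fS /= /Bs -modn_divl modn_mod.
  rewrite (modn_dvdm _ (dvdn_mull _ (dvdnn T))) //.
have := periodic_rate (R:=R) p0 f1 fp.
rewrite /has_rate /avg_success.
have -> : (\sum_(t < size frame * T) f t = \sum_(B <- frame) bsum B l)%N; last by [].
rewrite sum_blocks (big_nth Z) big_mkord; apply: eq_bigr => b _.
rewrite /bsum; apply: eq_bigr => j _.
by rewrite fS sched_nat // /Bs modn_small // inord_val.
Qed.

Lemma bsumZ l : bsum Z l = 0%N.
Proof. by rewrite /bsum big1 // => j _; rewrite ffunE. Qed.

Lemma sum_rep (F : bmat L T -> nat) r q :
  (\sum_(B <- flatten (nseq q r)) F B = q * \sum_(B <- r) F B)%N.
Proof.
elim: q => [|q IH]; first by rewrite big_nil.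
by rewrite /= big_cat IH mulSn.
Qed.

Lemma frame_sum l : (\sum_(B <- frame) bsum B l =
  \sum_(i < n) m i * \sum_(j < k i) bsum (A i j) l)%N.
Proof.
rewrite /frame big_cons bsumZ add0n big_flatten big_map big_enum /=.
apply: eq_bigr => i _.
rewrite /seg big_cat big_seq1 bsumZ Monoid.mulm1 sum_rep.
rewrite /mkseq big_map.
have -> : iota 0 (k i) = index_iota 0 (k i) by rewrite /index_iota subn0.
by rewrite big_mkord.
Qed.

Lemma frame_size : size frame = (1 + \sum_(i < n) (m i * k i + 1))%N.
Proof.
rewrite /frame /= add1n; congr S.
rewrite size_flatten /shape sumnE !big_map.
apply: eq_bigr => i _.
rewrite /seg size_cat /=; congr addn.
elim: (m i) => [|q IH] //=.
by rewrite size_cat IH size_mkseq mulSn.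
Qed.

End Frame.


Theorem theorem7 (R : realType) (L : finType) (N : network L) (T : nat) :
  (0 < #|L|)%N -> binary_profile N -> (maxn (character N) 1 <= T)%N ->
  @graph_region R L N T `<=` @achievable_region R L N.
Proof.
move=> _ bin; case: T => [|T'] hT; first by rewrite geq_max in hT; case/andP: hT.
have hc : (character N <= T'.+1)%N by rewrite geq_max in hT; case/andP: hT.
move=> x [n [lam [v [lam0 lam1 hv ->]]]].
have : forall i, exists kA : nat * (nat -> bmat L T'.+1),
    sg_cycle N kA.1 kA.2 /\ v i = cycle_rate R kA.1 kA.2.
  by move=> i; have [kk [AA [h1 h2]]] := hv i; exists (kk, AA).
case/boolp.choice => g hg.
pose k i := (g i).1; pose A i := (g i).2.
have hcyc i : sg_cycle N (k i) (A i) := (hg i).1.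
have k1 i : (1 <= k i)%N by case: (hcyc i).
pose cs i l := (\sum_(j < k i) bsum (A i j) l)%N.
have vE i l : v i l = (cs i l)%:R / (k i * T'.+1)%N%:R.
  rewrite (hg i).2 /cycle_rate mulrC; congr (_ / _); rewrite natr_sum.
  by apply: eq_bigr => j _; rewrite /bsum natr_sum.
have csle i l : (cs i l <= k i * T'.+1)%N.
  have bsle j : (bsum (A i j) l <= T'.+1)%N.
    rewrite /bsum; have := @leq_sum _ (index_enum 'I_T'.+1) xpredT
      (fun j0 => (A i j (l, j0) : nat)) (fun _ => 1%N) (fun j0 _ => leq_b1 _).
    by rewrite big_const_ord iter_addn_0 mul1n.
  rewrite /cs; have := @leq_sum _ (index_enum 'I_(k i)) xpredT
      (fun j => bsum (A i j) l) (fun _ => T'.+1) (fun j _ => bsle j).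
  by rewrite big_const_ord iter_addn_0 mulnC.
have kT0 i : 0 < (k i * T'.+1)%N%:R :> R by rewrite ltr0n muln_gt0 k1.
have v0 i l : 0 <= v i l by rewrite vE divr_ge0.
have v1 i l : v i l <= 1.
  by rewrite vE ler_pdivrMr // mul1r ler_nat.
split.
  by move=> l; apply: sumr_ge0 => i _; apply: mulr_ge0.
move=> eps e0.
pose K := (\sum_(i < n) k i)%N.
pose M := (Num.truncn ((1 + n + K)%:R / eps)).+1.
pose m i := Num.truncn (lam i * M%:R / (k i)%:R).
exists (sched (Bs k A m)) => l.
exists (((\sum_(B <- frame k A m) bsum B l)%N%:R / (size (frame k A m) * T'.+1)%N%:R)).
split; first exact: (S_rate hcyc bin hc).
rewrite frame_sum frame_size.
set TT := (T'.+1)%:R : R.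
have TT0 : 0 < TT by rewrite /TT ltr0n.
have MMe : 1 + n%:R + K%:R < eps * M%:R :> R.
  have h := truncnS_gt ((1 + n + K)%N%:R / eps).
  have h' : (1 + n + K)%N%:R < eps * M%:R :> R by rewrite -ltr_pdivrMl // mulrC.
  by move: h'; rewrite !natrD.
have k0 i : 0 < (k i)%:R :> R by rewrite ltr0n k1.
have mk i : (m i)%:R * (k i)%:R <= lam i * M%:R :> R.
  have h := truncn_le (lam i * M%:R / (k i)%:R).
  rewrite -ler_pdivlMr //; rewrite h; apply: divr_ge0 => //; apply: mulr_ge0 => //.
have mk2 i : lam i * M%:R < ((m i)%:R + 1) * (k i)%:R :> R.
  have h := truncnS_gt (lam i * M%:R / (k i)%:R).
  by rewrite -ltr_pdivrMr // natr1.
set Rv := \sum_(i < n) lam i * v i l.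
have Rv0 : 0 <= Rv by apply: sumr_ge0 => i _; apply: mulr_ge0.
have Rv1 : Rv <= 1.
  rewrite -lam1; apply: ler_sum => i _; exact: ler_piMr.
have hCt : M%:R * TT * Rv - TT * K%:R <=
    (\sum_(i < n) m i * \sum_(j < k i) bsum (A i j) l)%N%:R.
  have : \sum_(i < n) (M%:R * TT * (lam i * v i l) - TT * (k i)%:R) <=
      \sum_(i < n) ((m i)%:R * (cs i l)%:R) :> R.
    apply: ler_sum => i _.
    have cE : (cs i l)%:R = v i l * ((k i)%:R * TT) :> R.
      rewrite vE natrM /TT; field.
      apply/andP; split; first by rewrite addrC natr1 pnatr_eq0.
      by rewrite (gt_eqF (k0 i)).
    rewrite cE.
    have := mk2 i; have := v0 i l; have := v1 i l; have := lam0 i.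
    move=> h1 h2 h3 h4.
    have e1 : 0 <= (((m i)%:R + 1) * (k i)%:R - lam i * M%:R) * (v i l * TT).
      by apply: mulr_ge0; [rewrite subr_ge0 ltW | apply: mulr_ge0 => //; apply: ltW].
    have e2 : 0 <= (1 - v i l) * ((k i)%:R * TT).
      by apply: mulr_ge0; [rewrite subr_ge0 | apply: mulr_ge0; apply: ltW].
    nra.
  rewrite sumrB -mulr_sumr -mulr_sumr -natr_sum natr_sum.
  move=> h; apply: (le_trans h); rewrite natr_sum le_eqVlt; apply/orP; left.
  by apply/eqP; apply: eq_bigr => i _; rewrite natrM.
have hs : (1 + \sum_(i < n) (m i * k i + 1))%N%:R <= 1 + M%:R + n%:R :> R.
  rewrite natrD natr_sum -addrA lerD2l.
  have : \sum_(i < n) ((m i * k i + 1)%N%:R : R) <= \sum_(i < n) (lam i * M%:R + 1).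
    apply: ler_sum => i _; rewrite natrD natrM lerD2r; exact: mk.
  by rewrite big_split /= -mulr_suml lam1 mul1r sumr_const card_ord.
set Ct := (\sum_(i < n) m i * \sum_(j < k i) bsum (A i j) l)%N in hCt *.
set s := (1 + \sum_(i < n) (m i * k i + 1))%N in hs *.
have s0 : 0 < s%:R :> R by rewrite ltr0n /s.
rewrite natrM -/TT ler_pdivlMr; last by rewrite mulr_gt0.
have Ct0 : 0 <= Ct%:R :> R by [].
case: (lerP (Rv - eps) 0) => hR.
  apply: le_trans Ct0; rewrite mulr_le0_ge0 // mulr_ge0 // ltW //.
apply: le_trans hCt.
have h1 : (Rv - eps) * (s%:R * TT) <= (Rv - eps) * ((1 + M%:R + n%:R) * TT).
  apply: ler_wpM2l; first exact: ltW.
  by apply: ler_wpM2r; [exact: ltW | exact: hs].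
apply: (le_trans h1).
have hRn : Rv * n%:R <= n%:R :> R by rewrite ler_piMl.
have inner : (Rv - eps) * (1 + M%:R + n%:R) <= M%:R * Rv - K%:R.
  have : eps * n%:R >= 0 by rewrite mulr_ge0 // ltW.
  move=> h0; nra.
have := ler_wpM2r (ltW TT0) inner.
move=> h2.
have -> : (Rv - eps) * ((1 + M%:R + n%:R) * TT) = (Rv - eps) * (1 + M%:R + n%:R) * TT by ring.
apply: (le_trans h2).
by rewrite le_eqVlt; apply/orP; left; apply/eqP; ring.
Qed.
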